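(* Let $(X,\nu_X)$ and $(Y,\nu_Y)$ be centered spaces with $\operatorname{card} Y\ge 2$, and fix $x\in X$. Let $C_x(X,Y)$ be the set of functions $X\to Y$ that are centered at $x$, and define the relation $\hat x$ on $C_x(X,Y)$ by: $f\,\hat x\,g$ if and only if there is $N\in\nu_X(x)$ with $N\subseteq\{z\in X\mid f(z)=g(z)\}$. Then $\nu_X(x)$ is a filterbase on $X$ if and only if $\hat x$ is a nontrivial equivalence relation on $C_x(X,Y)$.
   Context: A centered structure on a set $X$ assigns to each point $x\in X$ a collection $\nu(x)$ of subsets of $X$ such that $x\in N$ for every $N\in\nu(x)$; a set with a centered structure is a centered space. For collections $\mathcal P,\mathcal Q$ of subsets of a set, write $\mathcal P\preceq\mathcal Q$ if for every $Q\in\mathcal Q$ there is $P\in\mathcal P$ with $P\subseteq Q$. A function $f\colon X\to Y$ between centered spaces $(X,\nu_X)$, $(Y,\nu_Y)$ is centered at $x\in X$ if $\{f(N)\mid N\in\nu_X(x)\}\preceq\nu_Y(f(x))$, i.e. for each $M\in\nu_Y(f(x))$ there is $N\in\nu_X(x)$ with $f(N)\subseteq M$. A nonempty collection $\mathcal P$ of subsets of $X$ is a filterbase on $X$ if (F0) every finite intersection $A_1\cap\cdots\cap A_n$ ($n\ge1$) of members of $\mathcal P$ is nonempty and (F2) for all $A,B\in\mathcal P$ there is $C\in\mathcal P$ with $C\subseteq A\cap B$. An equivalence relation on a set $S$ is nontrivial if it is not the total relation $S\times S$. *)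

(* Defs.v *)
From Stdlib Require Import List.
Import ListNotations.

Definition centered {X : Type} (nu : X -> (X -> Prop) -> Prop) : Prop :=
  forall x N, nu x N -> N x.

Definition image_sub {X Y : Type} (f : X -> Y) (N : X -> Prop) (M : Y -> Prop) : Prop :=
  forall z, N z -> M (f z).

(* f is centered at x: {f(N) | N ∈ nuX x} ≼ nuY (f x) *)
Definition centered_at {X Y : Type} (nuX : X -> (X -> Prop) -> Prop)
  (nuY : Y -> (Y -> Prop) -> Prop) (f : X -> Y) (x : X) : Prop :=
  forall M, nuY (f x) M -> exists N, nuX x N /\ image_sub f N M.

(* Filterbase: nonempty, (F0) nonempty finite intersections (n >= 1),
   (F2) directed downward. *)
Definition filterbase {X : Type} (P : (X -> Prop) -> Prop) : Prop :=
  (exists A, P A) /\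
  (forall l : list (X -> Prop), l <> [] -> Forall P l ->
     exists z, Forall (fun A => A z) l) /\
  (forall A B, P A -> P B -> exists C, P C /\ forall z, C z -> A z /\ B z).

Definition Cx {X Y : Type} (nuX : X -> (X -> Prop) -> Prop)
  (nuY : Y -> (Y -> Prop) -> Prop) (x : X) : Type :=
  { f : X -> Y | centered_at nuX nuY f x }.

Definition xhat {X Y : Type} (nuX : X -> (X -> Prop) -> Prop)
  (nuY : Y -> (Y -> Prop) -> Prop) (x : X) (f g : Cx nuX nuY x) : Prop :=
  exists N, nuX x N /\ forall z, N z -> proj1_sig f z = proj1_sig g z.

Definition equivalence_rel {S : Type} (R : S -> S -> Prop) : Prop :=
  (forall a, R a a) /\ (forall a b, R a b -> R b a) /\
  (forall a b c, R a b -> R b c -> R a c).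

Definition nontrivial_rel {S : Type} (R : S -> S -> Prop) : Prop :=
  ~ (forall a b, R a b).

(* Main.v *)
Require Import Defs.
From Stdlib Require Import List Classical ClassicalDescription.
Import ListNotations.

Lemma const_on_centered (X Y : Type)
  (nuX : X -> (X -> Prop) -> Prop) (nuY : Y -> (Y -> Prop) -> Prop)
  (hY : centered nuY) (x : X) (f : X -> Y) (N : X -> Prop) :
  nuX x N -> (forall z, N z -> f z = f x) -> centered_at nuX nuY f x.
Proof.
  intros HN Hc M HM. exists N. split; [exact HN|].
  intros z Hz. rewrite (Hc z Hz). apply hY; exact HM.
Qed.

Lemma const_centered (X Y : Type)
  (nuX : X -> (X -> Prop) -> Prop) (nuY : Y -> (Y -> Prop) -> Prop)
  (hY : centered nuY) (x : X) (y : Y) (N : X -> Prop) :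
  nuX x N -> centered_at nuX nuY (fun _ : X => y) x.
Proof. intros HN. apply (const_on_centered X Y nuX nuY hY x _ N HN). reflexivity. Qed.

Theorem mainTheorem3 (X Y : Type)
  (nuX : X -> (X -> Prop) -> Prop) (nuY : Y -> (Y -> Prop) -> Prop)
  (hX : centered nuX) (hY : centered nuY)
  (hcardY : exists y1 y2 : Y, y1 <> y2) (x : X) :
  filterbase (nuX x) <->
  (equivalence_rel (xhat nuX nuY x) /\ nontrivial_rel (xhat nuX nuY x)).
Proof.
  destruct hcardY as [y1 [y2 Hy]].
  split.
  - intros [[N0 HN0] [HF0 HF2]]. split; [split; [|split]|].
    + intros a. exists N0. split; auto.
    + intros a b [N [HN H]]. exists N. split; auto. intros z Hz. symmetry; auto.
    + intros a b c [N1 [HN1 H1]] [N2 [HN2 H2]].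
      destruct (HF2 N1 N2 HN1 HN2) as [C [HC HCs]].
      exists C. split; auto. intros z Hz. destruct (HCs z Hz).
      rewrite H1 by auto. auto.
    + intros Hall.
      pose (f1 := exist (fun f => centered_at nuX nuY f x) (fun _ : X => y1)
                   (const_centered X Y nuX nuY hY x _ N0 HN0)).
      pose (f2 := exist (fun f => centered_at nuX nuY f x) (fun _ : X => y2)
                   (const_centered X Y nuX nuY hY x _ N0 HN0)).
      destruct (Hall f1 f2) as [N [HN H]].
      destruct (HF0 [N]) as [z Hz]; [discriminate | constructor; auto |].
      inversion Hz; subst. apply Hy. exact (H z ltac:(assumption)).
  - intros [[Hrefl [Hsym Htr]] Hnt].
    assert (Ha : exists a : Cx nuX nuY x, True).
    { apply NNPP. intros Hn. apply Hnt. intros a. exfalso. apply Hn. exists a; auto. }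
    destruct Ha as [a _]. destruct (Hrefl a) as [N0 [HN0 _]].
    split; [exists N0; exact HN0|split].
    + intros l _ Hl. exists x. rewrite Forall_forall in *. intros A HA. apply hX. auto.
    + intros A B HA HB.
      pose (f := fun z => if excluded_middle_informative (A z) then y1 else y2).
      pose (h := fun z => if excluded_middle_informative (B z) then y1 else
                  if excluded_middle_informative (A z) then y2 else y1).
      assert (HfA : forall z, A z -> f z = y1).
      { intros z Hz. unfold f. destruct (excluded_middle_informative (A z)); tauto. }
      assert (HhB : forall z, B z -> h z = y1).
      { intros z Hz. unfold h. destruct (excluded_middle_informative (B z)); tauto. }
      assert (cf : centered_at nuX nuY f x).
      { apply (const_on_centered X Y nuX nuY hY x f A HA).
        intros z Hz. rewrite (HfA z Hz), (HfA x (hX _ _ HA)). reflexivity. }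
      assert (ch : centered_at nuX nuY h x).
      { apply (const_on_centered X Y nuX nuY hY x h B HB).
        intros z Hz. rewrite (HhB z Hz), (HhB x (hX _ _ HB)). reflexivity. }
      pose (F := exist (fun f => centered_at nuX nuY f x) f cf).
      pose (H := exist (fun f => centered_at nuX nuY f x) h ch).
      pose (G := exist (fun f => centered_at nuX nuY f x) (fun _ : X => y1)
                   (const_centered X Y nuX nuY hY x _ N0 HN0)).
      assert (R1 : xhat nuX nuY x F G).
      { exists A. split; [exact HA|]. intros z Hz. simpl. auto. }
      assert (R2 : xhat nuX nuY x G H).
      { exists B. split; [exact HB|]. intros z Hz. simpl. symmetry; auto. }
      destruct (Htr _ _ _ R1 R2) as [C [HC HCe]].
      exists C. split; auto. intros z Hz. specialize (HCe z Hz). simpl in HCe.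
      unfold f, h in HCe.
      destruct (excluded_middle_informative (A z)) as [HAz|HAz];
      destruct (excluded_middle_informative (B z)) as [HBz|HBz];
      try (split; assumption); exfalso; apply Hy; congruence.
Qed.
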